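(* Let $\beta>1$ be an Ito-Sadahiro number, with $d_{-\beta}(l_\beta)=d_1\cdots d_m\,(d_{m+1}\cdots d_{m+p})^\omega$, where $m\ge0$, $p\ge1$ are minimal such that $d_{-\beta}(l_\beta)$ can be written in this form. Then $\beta$ is an algebraic integer of degree at most $m+p$.
   Context: For $\beta>1$ put $l_\beta=-\frac{\beta}{\beta+1}$, $r_\beta=\frac{1}{\beta+1}$ and $I_\beta=[l_\beta,r_\beta)$. Define $T:I_\beta\to I_\beta$ by $T(x)=-\beta x-\lfloor -\beta x-l_\beta\rfloor$. The $(-\beta)$-expansion of $x\in I_\beta$ is the infinite word $d_{-\beta}(x)=x_1x_2x_3\cdots$ with $x_i=\lfloor -\beta T^{i-1}(x)-l_\beta\rfloor$ for $i\ge1$; then $x=\sum_{i\ge1}x_i(-\beta)^{-i}$. The notation $w^\omega$ denotes infinite repetition of the finite word $w$. A number $\beta>1$ is an Ito-Sadahiro number if $d_{-\beta}(l_\beta)$ is eventually periodic. *)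

(* Defs.v *)
From HB Require Import structures.
From mathcomp Require Import all_boot all_order all_algebra.
From mathcomp Require Import reals.
Set Implicit Arguments. Unset Strict Implicit. Unset Printing Implicit Defensive.
Import Order.TTheory GRing.Theory Num.Theory.
Local Open Scope ring_scope.

Section NegBeta.
Variable R : realType.

Definition lbeta (beta : R) : R := - (beta / (beta + 1)).

Definition Tnb (beta : R) (x : R) : R :=
  - beta * x - (Num.floor (- beta * x - lbeta beta))%:~R.

(* 0-indexed digits: nbdigit beta x i = x_{i+1} = floor(-beta T^i(x) - l_beta) *)
Definition nbdigit (beta : R) (x : R) (i : nat) : int :=
  Num.floor (- beta * iter i (Tnb beta) x - lbeta beta).

Definition dl (beta : R) (i : nat) : int := nbdigit beta (lbeta beta) i.

(* the word d written as d_1..d_m (d_{m+1}..d_{m+p})^omega (p >= 1) *)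
Definition preper_form (d : nat -> int) (m p : nat) : Prop :=
  (0 < p)%N /\ forall n : nat, (m <= n)%N -> d (n + p)%N = d n.

Definition algebraic_integer (beta : R) : Prop :=
  exists P : {poly int}, P \is monic /\ (map_poly intr P).[beta] = 0.

Definition alg_degree_le (beta : R) (n : nat) : Prop :=
  exists Q : {poly rat}, Q != 0 /\ (size Q <= n.+1)%N /\ (map_poly ratr Q).[beta] = 0.

End NegBeta.

(* Main.v *)
Require Import Defs.
From HB Require Import structures.
From mathcomp Require Import all_boot all_order all_algebra.
From mathcomp Require Import reals.
From mathcomp Require Import ring lra zify.
Import Order.TTheory GRing.Theory Num.Theory.
Local Open Scope ring_scope.

Section Aux.
Variable R : realType.
Variable beta : R.
Hypothesis hb : 1 < beta.

Let x (i : nat) : R := iter i (Tnb beta) (lbeta beta).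
Let d (i : nat) : int := dl beta i.

Lemma xS i : x i.+1 = - beta * x i - (d i)%:~R.
Proof. by []. Qed.

Lemma xbound i : lbeta beta <= x i < lbeta beta + 1.
Proof.
case: i => [|i]; first by rewrite /x /= lexx ltrDl ltr01.
rewrite xS /d /dl /nbdigit -/(x i).
set z := - beta * x i - lbeta beta.
have := floor_itv z; rewrite intrD => /andP[h1 h2].
have -> : - beta * x i = z + lbeta beta by rewrite /z; ring.
apply/andP; split; lra.
Qed.

Lemma xdiff a b : `|x a - x b| < 1.
Proof.
have := xbound a; have := xbound b => /andP[h1 h2] /andP[h3 h4].
rewrite ltr_norml; apply/andP; split; lra.
Qed.

Lemma pow_ge n : 1 + n%:R * (beta - 1) <= beta ^+ n.
Proof.
elim: n => [|n IH]; first by rewrite expr0 mul0r addr0.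
rewrite exprS -natr1.
have h0 : 0 <= n%:R :> R by rewrite ler0n.
have h1 : 0 <= (beta - 1) * (beta ^+ n - (1 + n%:R * (beta - 1))) by apply: mulr_ge0; [rewrite subr_ge0 ltW| rewrite subr_ge0].

have hb1 : 0 <= beta - 1 by rewrite subr_ge0 ltW.
have h2 : 0 <= n%:R * (beta - 1) * (beta - 1) by rewrite !mulr_ge0.
nra.
Qed.

Lemma zero_of_bounded (y : R) : (forall n, `|y| * beta ^+ n < 1) -> y = 0.
Proof.
move=> H; apply/eqP; apply/negPn/negP => hy.
have hy0 : 0 < `|y| by rewrite normr_gt0.
set c := (`|y| * (beta - 1))^-1.
have hb1 : 0 < beta - 1 by rewrite subr_gt0.
have hc : 0 <= c by rewrite invr_ge0 mulr_ge0 // ltW.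
have := archi_boundP hc; set n := Num.Def.archi_bound c => hn.
have := H n; have := pow_ge n => hp.
have hc1 : c * (`|y| * (beta - 1)) = 1 by rewrite mulVf //; by apply: lt0r_neq0; apply: mulr_gt0.
move=> Hn; suff : 1 < `|y| * beta ^+ n by rewrite ltNge (ltW Hn).
have e : (beta - 1) * `|y| * c = c * (`|y| * (beta - 1)) by ring.
rewrite -hc1 -e.
have k : 0 < (beta - 1) * `|y| by apply: mulr_gt0.
apply: (@lt_le_trans _ _ (((beta - 1) * `|y|) * n%:R)); first by rewrite ltr_pM2l.
rewrite (_ : (beta - 1) * `|y| * n%:R = `|y| * (n%:R * (beta - 1))); last by ring.
rewrite ler_pM2l //; apply: le_trans hp; rewrite lerDr //.
Qed.

Lemma periodic m p : preper_form (dl beta) m p -> x (m + p) = x m.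
Proof.
move=> [hp hper].
have key : forall n, x (m + p + n) - x (m + n) = (- beta) ^+ n * (x (m + p) - x m).
  elim=> [|n IH]; first by rewrite !addn0 expr0 mul1r.
  rewrite !addnS !xS.
  have -> : d (m + p + n)%N = d (m + n)%N.
    rewrite /d -(hper (m + n)%N (leq_addr n m)).
    by rewrite addnAC.
  rewrite exprS -mulrA -IH; ring.
apply/eqP; rewrite -subr_eq0; apply/eqP; apply: zero_of_bounded => n.
have := xdiff (m + p + n) (m + n); rewrite key normrM normrX normrN.
by rewrite (ger0_norm (ltW (lt_trans ltr01 hb))) mulrC.
Qed.


Lemma xform n : x n = (- beta) ^+ n * lbeta beta
  - \sum_(k < n) (d (n.-1 - k)%N)%:~R * (- beta) ^+ k.
Proof.
elim: n => [|n IH]; first by rewrite big_ord0 expr0 mul1r subr0.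
rewrite xS IH big_ord_recl /= expr0 mulr1 subn0.
have -> : \sum_(i < n) (d (n - bump 0 i)%N)%:~R * (- beta) ^+ bump 0 i
   = - beta * \sum_(k < n) (d (n.-1 - k)%N)%:~R * (- beta) ^+ k.
  rewrite mulr_sumr; apply: eq_bigr => i _.
  have -> : (n - bump 0 i = n.-1 - i)%N by rewrite /bump /=; lia.
  by rewrite /bump /= exprS; ring.
rewrite exprS; ring.
Qed.

Lemma Tident m n : (beta + 1) *
  \sum_(k < (m + n).+1) ((if (m < k)%N then (-1) ^+ k.-1 else 0) * beta ^+ k)
  = ((- beta) ^+ (m + n) - (- beta) ^+ m) * (- beta).
Proof.
elim: n => [|n IH].
  rewrite addn0 subrr mul0r big1 ?mulr0 // => i _.
  by rewrite ltnNge -ltnS ltn_ord /= mul0r.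
rewrite addnS big_ord_recr /= mulrDr IH (_ : (m < (m + n).+1)%N); last by rewrite ltnS leq_addr.
rewrite /= (exprS (- beta) (m + n)) (exprS beta (m + n)) (exprNn beta (m + n)).
move: ((-1) ^+ (m + n)) (beta ^+ (m + n)) ((- beta) ^+ m) => a b c.
ring.
Qed.

End Aux.

Lemma widsum (R : realType) (beta : R) (N n : nat) (f : nat -> R) : (n <= N)%N ->
  \sum_(k < N) ((if (k < n)%N then f k * (-1) ^+ k else 0) * beta ^+ k)
  = \sum_(k < n) f k * (- beta) ^+ k.
Proof.
move=> hn; rewrite (big_ord_widen N (fun k => f k * (- beta) ^+ k) hn).
rewrite [RHS]big_mkcond; apply: eq_bigr => k _; case: ifP => _; last by rewrite mul0r.
by rewrite (exprNn beta) -mulrA.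
Qed.

Theorem corollary1 (R : realType) (beta : R) (m p : nat) :
  1 < beta ->
  preper_form (dl beta) m p ->
  (forall m' p' : nat, preper_form (dl beta) m' p' -> (m <= m')%N /\ (p <= p')%N) ->
  algebraic_integer beta /\ alg_degree_le beta (m + p).
Proof.
move=> hb hpf _.
have hp : (0 < p)%N by case: hpf.
set d := dl beta.
pose q (k : nat) : int :=
  (if (m < k)%N then (-1) ^+ k.-1 else 0)
  - (if (k < m + p)%N then (-1) ^+ k * d ((m + p).-1 - k)%N else 0)
  + (if (k < m)%N then (-1) ^+ k * d (m.-1 - k)%N else 0).
pose P : {poly int} := \poly_(k < (m + p).+1) ((-1) ^+ (m + p).-1 * q k).
have h1 : (m < m + p)%N by lia.
have h2 : (m + p < m)%N = false by lia.
have hqtop : q (m + p)%N = (-1) ^+ (m + p).-1.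
  by rewrite /q ltnn h1 h2 subr0 addr0.
have hsz : size P = (m + p).+1.
  apply: size_poly_eq; rewrite /= hqtop -exprD -signr_odd oddD addbb /=.
  by [].
have hmon : P \is monic.
  by rewrite monicE lead_coefE hsz coef_poly ltnSn hqtop -exprD -signr_odd oddD addbb.
have hroot : (map_poly intr P).[beta] = 0 :> R.
  rewrite (horner_coef_wide _ (n:=(m+p).+1)); last first.
    by rewrite size_map_inj_poly ?hsz //; exact: intr_inj.
  under eq_bigr => k _ do rewrite coef_map coef_poly ltn_ord.
  have hq : forall k : nat, ((q k)%:~R : R) =
      (if (m < k)%N then (-1) ^+ k.-1 else 0)
      - (if (k < m + p)%N then (d ((m + p).-1 - k)%N)%:~R * (-1) ^+ k else 0)
      + (if (k < m)%N then (d (m.-1 - k)%N)%:~R * (-1) ^+ k else 0).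
    move=> k; rewrite /q intrD intrB;
    do 3 (case: ifP => _); rewrite ?rmorphM ?rmorphXn ?rmorphN1 ?mulr0z;
      rewrite ?(mulrC ((-1) ^+ k)); reflexivity.
  have -> : \sum_(k < (m + p).+1) (((-1) ^+ (m + p).-1 * q k)%:~R : R) * beta ^+ k
      = (-1) ^+ (m + p).-1 * \sum_(k < (m + p).+1) (q k)%:~R * beta ^+ k.
    rewrite mulr_sumr; apply: eq_bigr => k _.
    by rewrite intrM mulrA rmorphXn rmorphN1.
  rewrite (_ : \sum_(k < (m + p).+1) (q k)%:~R * beta ^+ k = 0) ?mulr0 //.
  under eq_bigr => k _ do rewrite hq mulrDl mulrBl.
  rewrite big_split sumrB /=.
  rewrite (@widsum _ beta (m + p).+1 (m + p) (fun k => (d ((m + p).-1 - k)%N)%:~R)) //.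
  rewrite (@widsum _ beta (m + p).+1 m (fun k => (d (m.-1 - k)%N)%:~R)); last by lia.
  have hT := @Tident _ beta m p.
  have hx1 := @xform _ beta hb (m + p).
  have hx0 := @xform _ beta hb m.
  have hper := @periodic _ beta hb m p hpf.
  rewrite hx1 hx0 in hper.
  set T := \sum_(i < (m + p).+1) _ in hT *.
  set S1 := \sum_(k < m + p) _ in hper *.
  set S0 := \sum_(k < m) _ in hper *.
  set A := (- beta) ^+ (m + p) in hT hper *.
  set B := (- beta) ^+ m in hT hper *.
  have hb1 : beta + 1 != 0 by apply: lt0r_neq0; rewrite addr_gt0 // (lt_trans ltr01 hb).
  have e : S1 = A * lbeta beta - (B * lbeta beta - S0) by rewrite -hper opprB addrC subrK.
  apply: (mulfI hb1); rewrite mulr0 !mulrDr mulrN hT e /lbeta.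
  by field.
split; first by exists P.
exists (map_poly intr P); split.
  by apply: monic_neq0; apply: monic_map.
split; first by rewrite size_rat_int_poly hsz.
rewrite -map_poly_comp -hroot; congr (_.[_]); apply: eq_map_poly => z /=.
exact: ratr_int.
Qed.
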